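(* Let $n\ge2$ and $\rho=\sum_{i=0}^n\lambda_i|D_n^i\rangle\langle D_n^i|$ with $\lambda_i\ge0$, $\sum_i\lambda_i=1$. Then $L(\rho)=n$ if and only if at least one of the following holds: (i) $\lambda_0\lambda_n\neq0$; (ii) $\lambda_i\neq0$ for every odd $i\in\{0,\dots,n\}$; (iii) $\lambda_i\ne0$ for every even $i\in\{0,\dots,n\}$.
   Context: Dicke states: $|D_n^i\rangle=\binom{n}{i}^{-1/2}\sum_{s\in\{0,1\}^n,\ \sum_js_j=i}|s_1\rangle\otimes\cdots\otimes|s_n\rangle$. For $S\subseteq[n]$, $\rho_S$ is the partial trace of $\rho$ over qubits outside $S$; $\mathcal C(\rho,\mathcal S)=\{\sigma\text{ density matrix}:\sigma_S=\rho_S\ \forall S\in\mathcal S\}$; $\mathcal S$ determines $\rho$ if $\mathcal C(\rho,\mathcal S)=\{\rho\}$; $L(\rho)=\min_{\mathcal S\text{ determines }\rho}\max_{S\in\mathcal S}|S|$. *)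

(* Defs.v *)
From HB Require Import structures.
From mathcomp Require Import all_boot all_order all_algebra.
Set Implicit Arguments. Unset Strict Implicit. Unset Printing Implicit Defensive.
Import Order.TTheory GRing.Theory Num.Theory.
Local Open Scope ring_scope.

Section Defs.
Variable C : numClosedFieldType.

(* computational basis of a finite system labelled by a finType I;
   an operator is its matrix in that basis *)
Definition op (I : finType) := I -> I -> C.

Definition op_eq (I : finType) (A B : op I) : Prop := forall x y, A x y = B x y.

Definition hermitian (I : finType) (A : op I) : Prop :=
  forall x y, A y x = (A x y)^*.

Definition psd (I : finType) (A : op I) : Prop :=
  forall v : I -> C, 0 <= \sum_x \sum_y (v x)^* * A x y * v y.

Definition density (I : finType) (A : op I) : Prop :=
  [/\ hermitian A, psd A & \sum_x A x x = 1].

(* n qubits: basis states |s_1 ... s_n>, s : 'I_n -> bool *)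
Definition BS (n : nat) := {ffun 'I_n -> bool}.

Definition sub_in (n : nat) (S : {set 'I_n}) := {i : 'I_n | i \in S}.
Definition sub_out (n : nat) (S : {set 'I_n}) := {i : 'I_n | i \in ~: S}.
Definition cfg_in (n : nat) (S : {set 'I_n}) := {ffun sub_in S -> bool}.
Definition cfg_out (n : nat) (S : {set 'I_n}) := {ffun sub_out S -> bool}.

Definition glue (n : nat) (S : {set 'I_n}) (a : cfg_in S) (c : cfg_out S) : BS n :=
  [ffun i : 'I_n =>
     if @insub _ (fun j => j \in S) (sub_in S) i is Some j then a j
     else if @insub _ (fun j => j \in ~: S) (sub_out S) i is Some k then c k
     else false].

Definition ptrace (n : nat) (S : {set 'I_n}) (A : op (BS n)) : op (cfg_in S) :=
  fun a b => \sum_(c : cfg_out S) A (glue a c) (glue b c).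

Arguments ptrace [n] S A _ _.

Definition determines (n : nat) (rho : op (BS n)) (Sc : {set {set 'I_n}}) : Prop :=
  forall sigma : op (BS n), density sigma ->
    (forall S, S \in Sc -> op_eq (ptrace S sigma) (ptrace S rho)) ->
    op_eq sigma rho.

Definition maxsize (n : nat) (Sc : {set {set 'I_n}}) : nat := \max_(S in Sc) #|S|.

Definition is_L (n : nat) (rho : op (BS n)) (k : nat) : Prop :=
  (exists Sc, determines rho Sc /\ maxsize Sc = k) /\
  (forall Sc, determines rho Sc -> (k <= maxsize Sc)%N).

Definition wt (n : nat) (s : BS n) : nat := #|[set i | s i]|.

Definition dicke (n i : nat) (s : BS n) : C :=
  if wt s == i then (sqrtC ('C(n, i))%:R)^-1 else 0.

Definition dicke_mix (n : nat) (lam : 'I_n.+1 -> C) : op (BS n) :=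
  fun x y => \sum_(i < n.+1) lam i * (dicke i x * (dicke i y)^*).

End Defs.

(* Main.v *)
Require Import Defs.
From HB Require Import structures.
From mathcomp Require Import all_boot all_order all_algebra all_fingroup.
From mathcomp Require Import ring.
Set Implicit Arguments. Unset Strict Implicit. Unset Printing Implicit Defensive.
Import Order.TTheory GRing.Theory Num.Theory.
Local Open Scope ring_scope.



Section Comb.
Variable n : nat.
Implicit Types x y : BS n.

Definition flip (q : 'I_n) x : BS n := [ffun i => if i == q then ~~ x i else x i].
Definition swp (p r : 'I_n) x : BS n :=
  [ffun i => if i == p then x r else if i == r then x p else x i].

Lemma flipK q : involutive (flip q).
Proof. by move=> x; apply/ffunP=> i; rewrite !ffunE; case: eqP => // _; rewrite negbK. Qed.

Lemma flip_q q x : flip q x q = ~~ x q.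
Proof. by rewrite ffunE eqxx. Qed.

Lemma wt_le x : (wt x <= n)%N.
Proof. by rewrite /wt (leq_trans (max_card _)) // card_ord. Qed.

Lemma wt_flip q x : wt (flip q x) = if x q then (wt x).-1 else (wt x).+1.
Proof.
rewrite /wt.
case hx: (x q).
  have -> : [set i | flip q x i] = [set i | x i] :\ q.
    by apply/setP=> i; rewrite !inE ffunE; case: eqP => [->|]; rewrite ?hx //.
  by rewrite (cardsD1 q [set i | x i]) inE hx.
have -> : [set i | flip q x i] = q |: [set i | x i].
  by apply/setP=> i; rewrite !inE ffunE; case: eqP => [->|]; rewrite ?hx //.
by rewrite cardsU1 inE hx.
Qed.

Lemma wt_flip_odd q x : odd (wt (flip q x)) = ~~ odd (wt x).
Proof.
rewrite wt_flip; case hx: (x q) => /=; last by [].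
have : (0 < wt x)%N.
  by rewrite /wt card_gt0; apply/set0Pn; exists q; rewrite inE.
by case: (wt x) => //= m _; rewrite negbK.
Qed.

Lemma wt_flip_eq q x y : x q = y q -> (wt (flip q x) == wt (flip q y)) = (wt x == wt y).
Proof.
move=> e; rewrite !wt_flip e; case hy: (y q); last by rewrite eqSS.
have h (z : BS n) : z q = true -> (0 < wt z)%N.
  by move=> hz; rewrite /wt card_gt0; apply/set0Pn; exists q; rewrite inE.
move: (h x (etrans e hy)) (h y hy).
by case: (wt x) => [|a] //; case: (wt y) => [|b].
Qed.

Lemma swpE p r x : swp p r x = [ffun i => x (tperm p r i)].
Proof.
apply/ffunP=> i; rewrite !ffunE. case: tpermP.
- by move=> ->; rewrite eqxx.
- by move=> ->; case: (eqVneq r p) => [->|_]; rewrite ?eqxx.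
- by move=> /eqP/negbTE-> /eqP/negbTE->.
Qed.

Lemma wt_swp p r x : wt (swp p r x) = wt x.
Proof.
rewrite /wt swpE.
have -> : [set i | [ffun i => x (tperm p r i)] i] = tperm p r @^-1: [set i | x i].
  by apply/setP=> i; rewrite !inE ffunE.
by rewrite card_preimset //; apply: perm_inj.
Qed.

Lemma swp_flip p r q x : q != p -> q != r -> swp p r (flip q x) = flip q (swp p r x).
Proof.
move=> qp qr; have hp : (p == q) = false by rewrite eq_sym (negbTE qp).
have hr : (r == q) = false by rewrite eq_sym (negbTE qr).
apply/ffunP=> i; rewrite !ffunE.
case: (eqVneq i p) => [->|ip]; first by rewrite ?ffunE hr hp.
case: (eqVneq i r) => [->|ir]; first by rewrite hp hr.
by [].
Qed.

Lemma swp_q p r q x : q != p -> q != r -> swp p r x q = x q.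
Proof. by move=> qp qr; rewrite ffunE (negbTE qp) (negbTE qr). Qed.

Lemma swp_neq p r x : x p != x r -> swp p r x != x.
Proof.
move=> h; apply/eqP=> /ffunP/(_ p); rewrite ffunE eqxx => e.
by move: h; rewrite e eqxx.
Qed.

Lemma flip_neq q x : flip q x != x.
Proof. apply/eqP=> /ffunP/(_ q); rewrite flip_q; by case: (x q). Qed.

Lemma flip_inj q : injective (flip q).
Proof. exact: can_inj (flipK q). Qed.

Definition res_in (S : {set 'I_n}) x : cfg_in S := [ffun j => x (val j)].
Definition res_out (S : {set 'I_n}) x : cfg_out S := [ffun j => x (val j)].

Lemma glue_in (S : {set 'I_n}) (a : cfg_in S) c i (h : i \in S) : glue a c i = a (exist _ i h).
Proof. by rewrite /glue ffunE (insubT (fun j => j \in S) h). Qed.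

Lemma glue_out (S : {set 'I_n}) (a : cfg_in S) c i (h : i \in ~: S) : glue a c i = c (exist _ i h).
Proof.
have h' : i \notin S by move: h; rewrite inE.
rewrite /glue ffunE insubF //; last by apply/negbTE.
by rewrite (insubT (fun j => j \in ~: S) h).
Qed.

Lemma glue_res (S : {set 'I_n}) x y : (forall i, i \notin S -> x i = y i) ->
  glue (res_in S x) (res_out S y) = x.
Proof.
move=> e; apply/ffunP=> i; case: (boolP (i \in S)) => h.
  by rewrite glue_in ffunE.
have h' : i \in ~: S by rewrite inE.
by rewrite glue_out ffunE /= e.
Qed.

Definition flipc (S : {set 'I_n}) (q : 'I_n) (c : cfg_out S) : cfg_out S :=
  [ffun k => if val k == q then ~~ c k else c k].

Lemma flipcK (S : {set 'I_n}) q : involutive (@flipc S q).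
Proof. by move=> c; apply/ffunP=> k; rewrite !ffunE; case: eqP => // _; rewrite negbK. Qed.

Lemma glue_flipc (S : {set 'I_n}) q (a : cfg_in S) c : q \notin S ->
  glue a (flipc q c) = flip q (glue a c).
Proof.
move=> qS; apply/ffunP=> i; rewrite [in RHS]ffunE.
case: (boolP (i \in S)) => h.
  rewrite !glue_in; case: eqP => // e; by move: qS; rewrite -e h.
have h' : i \in ~: S by rewrite inE.
by rewrite !glue_out ffunE.
Qed.

Lemma glue_q (S : {set 'I_n}) q (a b : cfg_in S) c : q \notin S -> glue a c q = glue b c q.
Proof.
move=> qS; have h' : q \in ~: S by rewrite inE.
by rewrite !glue_out.
Qed.

End Comb.



Section Lin.
Variable C : numClosedFieldType.
Variable I : finType.

Definition Bf (A : op C I) (u w : I -> C) := \sum_a \sum_b (u a)^* * A a b * w b.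

Lemma sum_delta (F : I -> C) y : \sum_b F b * (b == y)%:R = F y.
Proof.
rewrite (bigD1 y) //= eqxx mulr1 big1 ?addr0 // => b /negbTE->; by rewrite mulr0.
Qed.

Lemma Bf_expand (A : op C I) (u : I -> C) (s : C) (y : I) :
  Bf A (fun z => u z + s * (z == y)%:R) (fun z => u z + s * (z == y)%:R) =
  Bf A u u + s * \sum_a (u a)^* * A a y + s^* * \sum_b A y b * u b + s^* * s * A y y.
Proof.
rewrite /Bf.
transitivity (\sum_a \sum_b ((u a)^* * A a b * u b + (s * ((u a)^* * A a b)) * (b == y)%:R
   + (s^* * (A a b * u b) * (a == y)%:R) + (s^* * s * A a b * (a == y)%:R) * (b == y)%:R)).
  apply: eq_bigr => a _; apply: eq_bigr => b _.
  rewrite rmorphD rmorphM /= conjC_nat; ring.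
rewrite -!addrA; rewrite !addrA.
under eq_bigr do rewrite !big_split /=.
rewrite !big_split /=.
congr (_ + _ + _ + _).
- by rewrite mulr_sumr; apply: eq_bigr => a _; rewrite sum_delta.
- under eq_bigr do rewrite -mulr_suml.
  by rewrite sum_delta mulr_sumr.
- under eq_bigr do rewrite sum_delta.
  by rewrite sum_delta.
Qed.

Lemma Bf0 (A : op C I) : Bf A (fun _ => 0) (fun _ => 0) = 0.
Proof. by rewrite /Bf big1 // => a _; rewrite big1 // => b _; rewrite mulr0. Qed.

Lemma psd_diag (A : op C I) y : psd A -> 0 <= A y y.
Proof.
move=> hA; have := hA (fun z => 0 + 1 * (z == y)%:R).
rewrite -/(Bf _ _ _) Bf_expand Bf0.
have -> : \sum_a (0:C)^* * A a y = 0 by rewrite big1 // => a _; rewrite conjC0 mul0r.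
have -> : \sum_b A y b * 0 = 0 by rewrite big1 // => a _; rewrite mulr0.
by rewrite !mulr0 !add0r rmorph1 !mul1r.
Qed.

Lemma psd_kernel (A : op C I) (v : I -> C) : Defs.hermitian A -> psd A -> Bf A v v = 0 ->
  forall y, \sum_b A y b * v b = 0.
Proof.
move=> hH hA h0 y.
set c := \sum_b A y b * v b.
have hc : \sum_a (v a)^* * A a y = c^*.
  rewrite /c rmorph_sum; apply: eq_bigr => a _.
  by rewrite rmorphM /= (hH y a) mulrC.
have hy := psd_diag y hA.
set d := A y y + 1.
have d0 : 0 < d by rewrite /d ltr_wpDl.
have dc : d^* = d by rewrite geC0_conj // ltW.
have dn : d != 0 by rewrite gt_eqF.
have := hA (fun z => v z + (- (c / d)) * (z == y)%:R).
rewrite -/(Bf _ _ _) Bf_expand h0 hc -/c.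
rewrite rmorphN /= fmorph_div /= dc.
have -> : 0 + - (c / d) * c^* + - (c^* / d) * c + - (c^* / d) * - (c / d) * A y y
   = - ((c * c^*) * ((A y y + 2) / (d * d))).
  rewrite /d; field; by rewrite -/d.
rewrite oppr_ge0 => hle.
have hge : 0 <= (c * c^*) * ((A y y + 2) / (d * d)).
  rewrite mulr_ge0 ?mul_conjC_ge0 // divr_ge0 ?mulr_ge0 ?ltW //.
  by rewrite ltr_wpDl.
have := le_anti (introT andP (conj hle hge)) => /eqP.
rewrite mulf_eq0 => /orP[|].
  by rewrite mulf_eq0 conjC_eq0 orbb => /eqP.
rewrite mulf_eq0 invr_eq0 mulf_eq0 (negbTE dn) !orbF => /eqP h2.
have : 0 < A y y + 2 by rewrite ltr_wpDl.
by rewrite h2 ltxx.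
Qed.

Lemma Bf_two (A : op C I) x x' : x != x' ->
  Bf A (fun z => (z == x)%:R - (z == x')%:R) (fun z => (z == x)%:R - (z == x')%:R)
  = A x x + A x' x' - A x x' - A x' x.
Proof.
move=> nx; rewrite /Bf.
transitivity (\sum_a ((a == x)%:R - (a == x')%:R) * (A a x - A a x')).
  apply: eq_bigr => a _; rewrite rmorphB /= !conjC_nat.
  under eq_bigr do rewrite -mulrA; rewrite -mulr_sumr; congr (_ * _).
  transitivity (\sum_b (A a b * (b == x)%:R - A a b * (b == x')%:R)).
    by apply: eq_bigr => b _; rewrite mulrBr.
  by rewrite sumrB !sum_delta.
transitivity (\sum_a ((A a x - A a x') * (a == x)%:R - (A a x - A a x') * (a == x')%:R)).
  by apply: eq_bigr => a _; rewrite mulrC mulrBr.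
rewrite sumrB !sum_delta; ring.
Qed.

End Lin.



Section Dicke.
Variable C : numClosedFieldType.
Variable n : nat.
Implicit Types x y : BS n.

Lemma sum_flip0 (q : 'I_n) (F : BS n -> C) : (forall x, F (flip q x) = - F x) ->
  \sum_x F x = 0.
Proof.
move=> h.
have e : \sum_x F x = \sum_x F (flip q x).
  by rewrite (reindex_inj (@flip_inj n q)).
have : \sum_x F x = - \sum_x F x by rewrite {1}e -sumrN; apply: eq_bigr => x _.
move/eqP; rewrite -subr_eq0 opprK -mulr2n -mulr_natr mulf_eq0 /= pnatr_eq0 orbF.
by move/eqP.
Qed.

Lemma ptrace_flip0 (X : op C (BS n)) (S : {set 'I_n}) (q : 'I_n) :
  q \notin S ->
  (forall u v : BS n, u q = v q -> X (flip q u) (flip q v) = - X u v) ->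
  forall a b, @ptrace C n S X a b = 0.
Proof.
move=> qS h a b; rewrite /ptrace.
have e : \sum_(c : cfg_out S) X (glue a c) (glue b c) =
         \sum_(c : cfg_out S) X (glue a (flipc q c)) (glue b (flipc q c)).
  by rewrite (reindex_inj (can_inj (@flipcK n S q))).
have : \sum_(c : cfg_out S) X (glue a c) (glue b c) =
       - \sum_(c : cfg_out S) X (glue a c) (glue b c).
  rewrite {1}e -sumrN; apply: eq_bigr => c _.
  by rewrite !glue_flipc // h // (glue_q a b c qS).
move/eqP; rewrite -subr_eq0 opprK -mulr2n -mulr_natr mulf_eq0 /= pnatr_eq0 orbF.
by move/eqP.
Qed.

Lemma binC_neq0 i : (i <= n)%N -> ('C(n, i)%:R : C) != 0.
Proof. by move=> h; rewrite pnatr_eq0 -lt0n bin_gt0. Qed.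

Lemma dicke_prod i x y : dicke C i x * (dicke C i y)^* =
  if (wt x == i) && (wt y == i) then (('C(n, i))%:R)^-1 else 0.
Proof.
rewrite /dicke; case: eqP => _; case: eqP => _ /=; rewrite ?mul0r ?conjC0 ?mulr0 //.
set s := sqrtC _.
have s0 : 0 <= s by rewrite sqrtC_ge0 ler0n.
rewrite geC0_conj ?invr_ge0 // -invfM -expr2 /s sqrtCK //.
Qed.

Lemma dicke_mixE (lam : 'I_n.+1 -> C) x y : dicke_mix lam x y =
  if wt x == wt y then lam (inord (wt x)) / ('C(n, wt x))%:R else 0.
Proof.
rewrite /dicke_mix (bigD1 (inord (wt x))) //= big1 ?addr0.
  rewrite dicke_prod inordK ?ltnS ?wt_le // eqxx /= eq_sym.
  by case: eqP => _; rewrite ?mulr0.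
move=> i hi; rewrite dicke_prod.
case: eqP => //= e; last by rewrite mulr0.
by move: hi; rewrite e inord_val eqxx.
Qed.

Lemma dm_real (lam : 'I_n.+1 -> C) x y : (forall i, 0 <= lam i) -> 0 <= dicke_mix lam x y.
Proof.
move=> h; rewrite dicke_mixE; case: eqP => // _.
by rewrite divr_ge0 ?ler0n.
Qed.

Lemma herm_dm (lam : 'I_n.+1 -> C) : (forall i, 0 <= lam i) -> Defs.hermitian (dicke_mix lam).
Proof.
move=> h x y; rewrite geC0_conj ?dm_real // !dicke_mixE eq_sym.
by case: eqP => // ->.
Qed.

Definition wv (v : BS n -> C) (i : 'I_n.+1) := \sum_y (dicke C i y)^* * v y.

Lemma Bf_dm (lam : 'I_n.+1 -> C) v :
  Bf (dicke_mix lam) v v = \sum_i lam i * ((wv v i)^* * wv v i).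
Proof.
rewrite /Bf.
transitivity (\sum_x \sum_y \sum_i lam i * (((v x)^* * dicke C i x) * ((dicke C i y)^* * v y))).
  apply: eq_bigr => x _; apply: eq_bigr => y _.
  rewrite /dicke_mix mulr_sumr mulr_suml; apply: eq_bigr => i _; ring.
under eq_bigr do rewrite exchange_big /=.
rewrite exchange_big /=; apply: eq_bigr => i _.
under eq_bigr do rewrite -mulr_sumr. rewrite -mulr_sumr; congr (_ * _).
rewrite /wv rmorph_sum mulr_suml; apply: eq_bigr => x _.
rewrite mulr_sumr; apply: eq_bigr => y _.
by rewrite rmorphM /= conjCK (mulrC (dicke C i x)).
Qed.

Lemma psd_dm (lam : 'I_n.+1 -> C) : (forall i, 0 <= lam i) -> psd (dicke_mix lam).
Proof.
move=> h v; rewrite -/(Bf _ _ _) Bf_dm; apply: sumr_ge0 => i _.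
by rewrite mulr_ge0 // mulrC mul_conjC_ge0.
Qed.

Lemma card_wt i : #|[set x : BS n | wt x == i]| = 'C(n, i).
Proof.
pose f (x : BS n) : {set 'I_n} := [set j | x j].
pose g (A : {set 'I_n}) : BS n := [ffun j => j \in A].
have fK : cancel f g by move=> x; apply/ffunP=> j; rewrite ffunE inE.
have gK : cancel g f by move=> A; apply/setP=> j; rewrite inE ffunE.
have -> : [set x : BS n | wt x == i] = f @^-1: [set A : {set 'I_n} | #|A| == i].
  by apply/setP=> x; rewrite !inE.
rewrite on_card_preimset ?card_draws ?card_ord //.
by apply: onW_bij; exists g.
Qed.

Lemma trace_dm (lam : 'I_n.+1 -> C) : \sum_x dicke_mix lam x x = \sum_i lam i.
Proof.
rewrite (partition_big (fun x : BS n => (inord (wt x) : 'I_n.+1)) xpredT) //=.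
apply: eq_bigr => i _.
transitivity (\sum_(x in [pred x : BS n | wt x == i]) lam i / ('C(n, i))%:R).
  apply: eq_big => x.
    rewrite inE; apply/eqP/eqP => [<-|e]; first by rewrite inordK // ltnS wt_le.
    by apply: val_inj; rewrite /= inordK // ltnS wt_le.
  by move=> /eqP <-; rewrite dicke_mixE eqxx inordK // ltnS wt_le.
rewrite sumr_const.
have -> : #|[pred x : BS n | wt x == i]| = 'C(n, i).
  by rewrite -card_wt; apply: eq_card => x; rewrite inE.
rewrite -(mulr_natr (lam i / _)) divfK //; apply: binC_neq0.
by rewrite -ltnS.
Qed.

End Dicke.



Section Hard.
Variable C : numClosedFieldType.
Variable n : nat.
Implicit Types x y : BS n.

Definition cnt (c : bool) x := #|[set i | x i != c]|.

Lemma cnt_flip c q x : x q != c -> cnt c (flip q x) = (cnt c x).-1.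
Proof.
move=> hx; rewrite /cnt.
have -> : [set i | flip q x i != c] = [set i | x i != c] :\ q.
  apply/setP=> i; rewrite !inE ffunE; case: (eqVneq i q) => [->|hi] //=; rewrite ?eqxx ?(negbTE hi) //=.
  by move: hx; case: (x q); case: c.
by rewrite (cardsD1 q [set i | x i != c]) inE hx.
Qed.

Lemma cnt_swp c p r x : cnt c (swp p r x) = cnt c x.
Proof.
rewrite /cnt swpE.
have -> : [set i | [ffun i => x (tperm p r i)] i != c] = tperm p r @^-1: [set i | x i != c].
  by apply/setP=> i; rewrite !inE ffunE.
by rewrite card_preimset //; apply: perm_inj.
Qed.

Lemma cnt0 c x : cnt c x = 0%N -> x = [ffun => c].
Proof.
move/eqP; rewrite cards_eq0 => /eqP h; apply/ffunP=> i; rewrite ffunE.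
apply/eqP; apply: contraT => hi.
have : i \in [set i | x i != c] by rewrite inE.
by rewrite h inE.
Qed.

Lemma swp_r p r x : swp p r x r = x p.
Proof. rewrite ffunE eqxx; by case: (eqVneq r p) => [->|]. Qed.

Lemma exists_wt k : (k <= n)%N -> exists x : BS n, wt x = k.
Proof.
move=> hk; have : (0 < #|[set x : BS n | wt x == k]|)%N by rewrite card_wt bin_gt0.
rewrite card_gt0 => /set0Pn[x]; rewrite inE => /eqP; by exists x.
Qed.

Variable lam : 'I_n.+1 -> C.
Hypothesis hpos : forall i, 0 <= lam i.
Variable sigma : op C (BS n).
Hypothesis hsig : density sigma.
Let rho := dicke_mix lam.
Hypothesis hfl : forall q x y, x q = y q ->
  sigma x y + sigma (flip q x) (flip q y) = rho x y + rho (flip q x) (flip q y).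

Let D x y := sigma x y - rho x y.

Lemma D_flip q x y : x q = y q -> D (flip q x) (flip q y) = - D x y.
Proof. move=> e; have := hfl e; rewrite /D => h; apply/eqP; rewrite -subr_eq0; apply/eqP.
rewrite opprB; have -> : sigma (flip q x) (flip q y) = rho x y + rho (flip q x) (flip q y) - sigma x y.
  by rewrite -h; ring.
ring.
Qed.

Lemma sig_herm : Defs.hermitian sigma.
Proof. by case: hsig. Qed.
Lemma sig_psd : psd sigma.
Proof. by case: hsig. Qed.

Lemma rho_xx x : rho x x = lam (inord (wt x)) / ('C(n, wt x))%:R.
Proof. by rewrite /rho dicke_mixE eqxx. Qed.

Let z0 : BS n := [ffun => false].

Lemma D_diag_sign m : forall x, wt x = m -> D x x = (-1) ^+ m * D z0 z0.
Proof.
elim: m => [|m IH] x hx.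
  have -> : x = z0.
    apply/ffunP=> i; rewrite ffunE; apply/negbTE/negP=> hi.
    move: hx; rewrite /wt; move/eqP; rewrite cards_eq0 => /eqP h.
    have : i \in [set i | x i] by rewrite inE.
    by rewrite h inE.
  by rewrite expr0 mul1r.
have [q hq] : exists q, x q.
  have : (0 < wt x)%N by rewrite hx.
  by rewrite /wt card_gt0 => /set0Pn[q]; rewrite inE; exists q.
have hw : wt (flip q x) = m by rewrite wt_flip hq hx.
have := D_flip (q:=q) (x:=flip q x) (y:=flip q x) erefl; rewrite flipK => ->.
by rewrite (IH _ hw) exprS; ring.
Qed.

Lemma Bf_delta (A : op C (BS n)) y : Bf A (fun z => 0 + 1 * (z == y)%:R) (fun z => 0 + 1 * (z == y)%:R) = A y y.
Proof.
rewrite Bf_expand Bf0.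
have -> : \sum_a (0:C)^* * A a y = 0 by rewrite big1 // => a _; rewrite conjC0 mul0r.
have -> : \sum_b A y b * 0 = 0 by rewrite big1 // => a _; rewrite mulr0.
by rewrite !mulr0 !add0r rmorph1 !mul1r.
Qed.

Variables (a b : 'I_n.+1).
Hypotheses (ha : odd a) (hla : lam a = 0) (hb : ~~ odd b) (hlb : lam b = 0).

Lemma D_diag x : D x x = 0.
Proof.
have [xa hxa] := exists_wt (ltn_ord a : (a <= n)%N).
have [xb hxb] := exists_wt (ltn_ord b : (b <= n)%N).
have ea : D xa xa = sigma xa xa.
  by rewrite /D rho_xx hxa inord_val hla mul0r subr0.
have eb : D xb xb = sigma xb xb.
  by rewrite /D rho_xx hxb inord_val hlb mul0r subr0.
have h1 := psd_diag xa sig_psd; have h2 := psd_diag xb sig_psd.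
rewrite -ea (D_diag_sign hxa) -signr_odd ha expr1 mulN1r oppr_ge0 in h1.
rewrite -eb (D_diag_sign hxb) -signr_odd (negbTE hb) expr0 mul1r in h2.
have e0 : D z0 z0 = 0 by apply: le_anti; rewrite h1 h2.
by rewrite (D_diag_sign (erefl (wt x))) e0 mulr0.
Qed.

Lemma zero_row x : lam (inord (wt x)) = 0 -> forall y, D x y = 0 /\ D y x = 0.
Proof.
move=> hl.
have sxx : sigma x x = 0.
  by have := D_diag x; rewrite /D rho_xx hl mul0r subr0.
have hk := psd_kernel sig_herm sig_psd (etrans (Bf_delta sigma x) sxx).
have syx y : sigma y x = 0.
  by have := hk y; rewrite (eq_bigr (fun j => sigma y j * (j == x)%:R)) ?sum_delta //
     => j _; rewrite add0r mul1r.
move=> y; rewrite /D /rho !dicke_mixE syx.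
have -> : sigma x y = 0 by rewrite sig_herm syx conjC0.
rewrite [wt y == _]eq_sym; case: eqP => [<-|]; rewrite ?hl ?mul0r ?subr0 //.
Qed.

Lemma rho_wt x x' y y' : wt x = wt x' -> wt y = wt y' -> rho x y = rho x' y'.
Proof. by move=> e1 e2; rewrite /rho !dicke_mixE e1 e2. Qed.

Lemma D_swp p r q x : q != p -> q != r -> x p != x r ->
  forall y, D (swp p r x) y = D x y.
Proof.
move=> qp qr hpr.
set x' := swp p r x.
set u := flip q x; set u' := flip q x'.
have nx : x != x' by rewrite eq_sym swp_neq.
have hu' : u' = swp p r u by rewrite /u' /u swp_flip.
have nu : u != u'.
  rewrite hu' eq_sym swp_neq // /u !ffunE.
  by rewrite (eq_sym p) (eq_sym r) (negbTE qp) (negbTE qr).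
have wx : wt x' = wt x by rewrite wt_swp.
have wu : wt u' = wt u by rewrite hu' wt_swp.
have exq : x q = x' q by rewrite /x' swp_q.
have Q1 := sig_psd (fun z => (z == x)%:R - (z == x')%:R).
have Q2 := sig_psd (fun z => (z == u)%:R - (z == u')%:R).
rewrite -/(Bf _ _ _) Bf_two // in Q1.
rewrite -/(Bf _ _ _) Bf_two // in Q2.
have sD v w : sigma v w = rho v w + D v w by rewrite /D; ring.
have E1 : sigma x x + sigma x' x' - sigma x x' - sigma x' x = - (D x x' + D x' x).
  rewrite !sD !D_diag (rho_wt (x:=x') (x':=x) (y:=x') (y':=x)) //.
  rewrite (rho_wt (x:=x) (x':=x) (y:=x') (y':=x)) //.
  rewrite (rho_wt (x:=x') (x':=x) (y:=x) (y':=x)) //; ring.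
have E2 : sigma u u + sigma u' u' - sigma u u' - sigma u' u = D x x' + D x' x.
  rewrite !sD !D_diag (rho_wt (x:=u') (x':=u) (y:=u') (y':=u)) //.
  rewrite (rho_wt (x:=u) (x':=u) (y:=u') (y':=u)) //.
  rewrite (rho_wt (x:=u') (x':=u) (y:=u) (y':=u)) //.
  rewrite /u /u' (D_flip exq) (D_flip (esym exq)); ring.
rewrite E1 oppr_ge0 in Q1; rewrite E2 in Q2.
have e0 : D x x' + D x' x = 0 by apply: le_anti; rewrite Q1 Q2.
have hB : Bf sigma (fun z => (z == x)%:R - (z == x')%:R) (fun z => (z == x)%:R - (z == x')%:R) = 0.
  by rewrite Bf_two // E1 e0 oppr0.
have hk := psd_kernel sig_herm sig_psd hB.
have col y : sigma y x = sigma y x'.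
  have := hk y.
  rewrite (eq_bigr (fun j => sigma y j * (j == x)%:R - sigma y j * (j == x')%:R)); last first.
    by move=> j _; rewrite mulrBr.
  by rewrite sumrB !sum_delta => /eqP; rewrite subr_eq0 => /eqP.
move=> y; rewrite /D sig_herm -col -sig_herm.
by rewrite (rho_wt (x:=x') (x':=x) (y:=y) (y':=y)).
Qed.

Variable c : bool.
Hypothesis hc : lam (inord (wt ([ffun => c] : BS n))) = 0.

Lemma neqc_neg (bb : bool) : bb != c -> bb = ~~ c.
Proof. by case: bb; case: c. Qed.

Lemma cnt_gt0 x q : x q != c -> (0 < cnt c x)%N.
Proof. by move=> h; rewrite /cnt card_gt0; apply/set0Pn; exists q; rewrite inE. Qed.

Lemma D_zero_aux N : forall x y, (cnt c x + cnt c y <= N)%N -> D x y = 0.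
Proof.
elim: N => [|N IH] x y hm.
  have hx : cnt c x = 0%N by move: hm; rewrite leqn0 addn_eq0 => /andP[/eqP].
  by have := zero_row (x:=x); rewrite (cnt0 hx) => /(_ hc y) [].
have common x' y' q : (cnt c x' + cnt c y' <= N.+1)%N -> x' q != c -> y' q != c -> D x' y' = 0.
  move=> hm' hx hy.
  have e : x' q = y' q by rewrite (neqc_neg hx) (neqc_neg hy).
  have e' : flip q x' q = flip q y' q by rewrite !flip_q e.
  rewrite -(flipK q x') -(flipK q y') (D_flip e') IH ?oppr0 //.
  rewrite !cnt_flip //.
  move: (cnt_gt0 hx) (cnt_gt0 hy) hm'.
  by case: (cnt c x') => // k; case: (cnt c y') => // l _ _ /=; rewrite addnS ltnS => /ltnW.
case: (eqVneq x [ffun => c]) => [ex|nx].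
  by have := zero_row (x:=x); rewrite ex => /(_ hc y) [].
case: (eqVneq y [ffun => c]) => [ey|ny].
  by have := zero_row (x:=y); rewrite ey => /(_ hc x) [].
have [p hp] : exists p, x p != c.
  apply/existsP; apply: contraR nx; rewrite negb_exists => /forallP h.
  by apply/eqP/ffunP=> i; rewrite ffunE; move: (h i); rewrite negbK => /eqP.
have [r hr] : exists r, y r != c.
  apply/existsP; apply: contraR ny; rewrite negb_exists => /forallP h.
  by apply/eqP/ffunP=> i; rewrite ffunE; move: (h i); rewrite negbK => /eqP.
case: (boolP (y p != c)) => [hyp|]; first exact: (common _ _ p).
rewrite negbK => /eqP hyp.
case: (boolP (x r != c)) => [hxr|]; first exact: (common _ _ r).
rewrite negbK => /eqP hxr.
have pr : p != r by apply: contraNneq hr => <-; rewrite hyp.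
have xpr : x p != x r by rewrite hxr.
case: (pickP [pred q | (q != p) && (q != r)]) => [q /andP[qp qr] | hnone].
  rewrite -(D_swp qp qr xpr y).
  apply: (common _ _ r); last by [].
    by rewrite cnt_swp.
  by rewrite swp_r.
have hall i : i = p \/ i = r.
  move: (hnone i) => /= /negbT; rewrite negb_and !negbK.
  by case/orP => /eqP ->; [left|right].
have hn : (n <= 2)%N.
  have : (#|'I_n| <= #|[set p; r]|)%N.
    by apply: subset_leq_card; apply/subsetP => i _; rewrite !inE; case: (hall i) => ->; rewrite eqxx ?orbT.
  by rewrite card_ord => /leq_trans; apply; rewrite cards2; case: (p == r).
have w1 : wt x = 1%N.
  rewrite /wt (_ : [set i | x i] = [set (if c then r else p)]) ?cards1 //.
  apply/setP=> i; rewrite !inE; case: (hall i) => ->.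
    rewrite (neqc_neg hp); move: hp hyp hr hxr xpr; case: c => /= hp hyp hr hxr xpr; rewrite ?eqxx //.
    by rewrite (negbTE pr).
  rewrite hxr; move: hp hyp hr hxr xpr; case: c => /= hp hyp hr hxr xpr; rewrite ?eqxx //.
  by rewrite eq_sym (negbTE pr).
have a1 : a = inord 1.
  apply: val_inj; rewrite /= inordK; last by rewrite ltnS (leq_ltn_trans (leq0n _) (ltn_ord p)).
  have := ltn_ord a; rewrite ltnS => ha2.
  move: ha ha2 (leq_trans ha2 hn); case: (val a) => [|[|[|k]]] //.
have := zero_row (x:=x); rewrite w1 -a1 => /(_ hla y) [].
by [].
Qed.

Lemma D_zero x y : sigma x y = rho x y.
Proof.
apply/eqP; rewrite -subr_eq0; apply/eqP.
exact: (D_zero_aux (leqnn _)).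
Qed.

End Hard.



Section Link.
Variable C : numClosedFieldType.
Variable n : nat.
Implicit Types x y : BS n.

Lemma ptrace_two (X : op C (BS n)) q x y : x q = y q ->
  @ptrace C n [set~ q] X (res_in [set~ q] x) (res_in [set~ q] y) = X x y + X (flip q x) (flip q y).
Proof.
move=> e.
set S := [set~ q].
have qS : q \notin S by rewrite !inE eqxx.
have hq : q \in ~: S by rewrite inE.
pose k0 : sub_out S := exist _ q hq.
have allk (k : sub_out S) : k = k0.
  apply: val_inj => /=; case: k => i /=; by rewrite !inE negbK => /eqP.
set c0 := res_out S x.
have allc (c : cfg_out S) : (c == c0) || (c == flipc q c0).
  case: (eqVneq (c k0) (c0 k0)) => h.
    by apply/orP; left; apply/eqP/ffunP=> k; rewrite (allk k).
  apply/orP; right; apply/eqP/ffunP=> k; rewrite (allk k) ffunE /= eqxx.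
  by move: h; case: (c k0); case: (c0 k0).
have ne : flipc q c0 != c0.
  apply/eqP=> /ffunP/(_ k0); rewrite ffunE /= eqxx; by case: (c0 k0).
rewrite /ptrace (bigD1 c0) //= (bigD1 (flipc q c0)) ?ne //= big1 ?addr0; last first.
  by move=> c /andP[h1 h2]; move: (allc c); rewrite (negbTE h1) (negbTE h2).
have g1 : glue (res_in S x) c0 = x by rewrite glue_res.
have g2 : glue (res_in S y) c0 = y.
  by rewrite glue_res // => i; rewrite !inE negbK => /eqP ->.
by rewrite !glue_flipc // g1 g2.
Qed.

Lemma maxsize_C1 : (maxsize [set [set~ q] | q : 'I_n] <= n.-1)%N.
Proof.
apply/bigmax_leqP => S /imsetP[q _ ->].
by rewrite cardsC1 card_ord.
Qed.

Lemma hard_det (lam : 'I_n.+1 -> C) (hpos : forall i, 0 <= lam i) (a b : 'I_n.+1)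
  (ha : odd a) (hla : lam a = 0) (hb : ~~ odd b) (hlb : lam b = 0) (c : bool)
  (hc : lam (inord (wt ([ffun => c] : BS n))) = 0) :
  determines (dicke_mix lam) [set [set~ q] | q : 'I_n].
Proof.
move=> sigma hsig hS; red => x y.
apply: (D_zero hsig _ ha hla hb hlb hc).
move=> q u v e.
have := hS [set~ q] (imset_f _ _) (res_in [set~ q] u) (res_in [set~ q] v).
by rewrite !ptrace_two //; apply.
Qed.

Lemma ptrace_T (X : op C (BS n)) x y :
  @ptrace C n setT X (res_in setT x) (res_in setT y) = X x y.
Proof.
rewrite /ptrace.
have g (u : BS n) c : glue (res_in setT u) c = u.
  apply/ffunP=> i; have hi : i \in [set: 'I_n] by rewrite inE.
  by rewrite (glue_in _ _ hi) ffunE.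
under eq_bigr do rewrite !g.
rewrite sumr_const.
have -> : #|[pred c : cfg_out [set: 'I_n] | true]| = 1%N.
  rewrite cardT -cardE card_ffun card_sig.
  have -> : #|[pred x : 'I_n | x \in ~: [set: 'I_n]]| = 0%N.
    by apply: eq_card0 => i; rewrite !inE.
  by [].
by [].
Qed.

Lemma det_T (lam : 'I_n.+1 -> C) : determines (dicke_mix lam) [set setT].
Proof.
move=> sigma _ hS; red => x y.
have := hS setT (set11 _) (res_in setT x) (res_in setT y).
by rewrite !ptrace_T.
Qed.

Lemma maxsize_T : maxsize [set [set: 'I_n]] = n.
Proof. by rewrite /maxsize big_set1 cardsT card_ord. Qed.

Variable lam : 'I_n.+1 -> C.
Let rho := dicke_mix lam.

Definition antif (X : op C (BS n)) :=
  forall q (u v : BS n), u q = v q -> X (flip q u) (flip q v) = - X u v.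

Lemma notdet (X : op C (BS n)) t x0 y0 : antif X ->
  density (fun x y => rho x y + t * X x y) -> t * X x0 y0 != 0 ->
  forall Sc, determines rho Sc -> (n <= maxsize Sc)%N.
Proof.
move=> hX hd hne Sc hdet; rewrite leqNgt; apply/negP => hlt.
have := hdet _ hd.
have hS : forall S, S \in Sc -> op_eq (ptrace (S:=S) (fun x y => rho x y + t * X x y)) (ptrace (S:=S) rho).
  move=> S hSc a b.
  have hcS : (#|S| < n)%N := leq_ltn_trans (leq_bigmax_cond (F := fun S0 : {set 'I_n} => #|S0|) _ hSc) hlt.
  case: (pickP [pred q | q \notin S]) => [q /= qS | hnone]; last first.
    have : (n <= #|S|)%N.
      rewrite -[in X in (X <= _)%N](card_ord n); apply: subset_leq_card.
      by apply/subsetP => i _; move: (hnone i) => /= /negbT; rewrite negbK.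
    by rewrite leqNgt hcS.
  rewrite /ptrace big_split /= -mulr_sumr.
  by have := ptrace_flip0 qS (hX q) a b; rewrite /ptrace => ->; rewrite mulr0 addr0.
move=> /(_ hS x0 y0) /eqP; rewrite -subr_eq0 addrC addKr.
by rewrite (negbTE hne).
Qed.

Lemma trace_anti (X : op C (BS n)) : (0 < n)%N -> antif X -> \sum_x X x x = 0.
Proof.
move=> hn hX; apply: (sum_flip0 (q := Ordinal hn)) => x.
exact: hX.
Qed.

End Link.



Section Easy.
Variable C : numClosedFieldType.
Variable n : nat.
Hypothesis hn : (0 < n)%N.
Variable lam : 'I_n.+1 -> C.
Hypothesis hpos : forall i, 0 <= lam i.
Hypothesis hsum : \sum_(i < n.+1) lam i = 1.
Implicit Types x y : BS n.
Let rho := dicke_mix lam.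

Lemma lam_le1 i : lam i <= 1.
Proof. by rewrite -hsum (bigD1 i) //= lerDl sumr_ge0. Qed.

Lemma psd_ext (A B : op C (BS n)) : (forall x y, A x y = B x y) -> psd A -> psd B.
Proof.
move=> h hA v; have := hA v; congr (_ <= _).
by apply: eq_bigr => x _; apply: eq_bigr => y _; rewrite h.
Qed.

Definition Xp : op C (BS n) := fun x y => if wt x == wt y then (-1) ^+ (wt x) else 0.

Lemma antif_Xp : antif Xp.
Proof.
move=> q u v e; rewrite /Xp wt_flip_eq //; case: eqP => _; last by rewrite oppr0.
by rewrite -signr_odd wt_flip_odd signrN signr_odd.
Qed.

Lemma par_case (e : bool) : (forall i : 'I_n.+1, odd i = e -> lam i != 0) ->
  forall Sc, determines rho Sc -> (n <= maxsize Sc)%N.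
Proof.
move=> hnz.
set P := \prod_(j : 'I_n.+1 | odd j == e) lam j.
have P0 : 0 <= P by apply: prodr_ge0.
have Pne : P != 0 by apply/prodf_neq0 => i /eqP; apply: hnz.
have fn0 : (0 : C) < (n`!)%:R by rewrite ltr0n fact_gt0.
set t := (-1) ^+ (~~ e) * P / (n`!)%:R.
pose mu (i : 'I_n.+1) := lam i + t * (-1) ^+ i * ('C(n, i))%:R.
have hs : forall x y, rho x y + t * Xp x y = dicke_mix mu x y.
  move=> x y; rewrite /rho !dicke_mixE /Xp; case: eqP => _; last by rewrite mulr0 addr0.
  rewrite /mu inordK ?ltnS ?wt_le //; field.
  by apply: binC_neq0; apply: wt_le.
have hmu : forall i, 0 <= mu i.
  move=> i.
  have cle : ('C(n, i))%:R / (n`!)%:R <= (1 : C).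
    rewrite ler_pdivrMr // mul1r ler_nat.
    have hi : (i <= n)%N by rewrite -ltnS.
    by rewrite -(bin_fact hi) leq_pmulr // muln_gt0 !fact_gt0.
  have cge : (0 : C) <= ('C(n, i))%:R / (n`!)%:R by rewrite divr_ge0 // ltW.
  rewrite /mu; have -> : lam i + t * (-1) ^+ i * ('C(n, i))%:R = lam i + ((-1) ^+ (~~ e) * (-1) ^+ i) * (P * (('C(n, i))%:R / (n`!)%:R)).
    by rewrite /t; ring.
  case he: (odd i == e).
    have -> : (-1) ^+ (~~ e) * (-1) ^+ i = - 1 :> C.
      rewrite -exprD -signr_odd oddD oddb.
      by move/eqP: he => <-; case: (odd i).
    rewrite mulN1r subr_ge0.
    apply: (le_trans (y := P)).
      by rewrite -[X in _ <= X]mulr1 ler_wpM2l.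
    rewrite /P (bigD1 i) ?he //= -[X in _ <= X]mulr1 ler_wpM2l //.
    apply: prodr_ile1 => j _; rewrite hpos /=; exact: lam_le1.
  have -> : (-1) ^+ (~~ e) * (-1) ^+ i = 1 :> C.
    rewrite -exprD -signr_odd oddD oddb.
    by move: he; case: (odd i); case: (e).
  by rewrite mul1r addr_ge0 // mulr_ge0.
have hd : density (fun x y => rho x y + t * Xp x y).
  split.
  - by move=> x y; rewrite !hs; apply: herm_dm.
  - by apply: (psd_ext (A := dicke_mix mu)) => [x y|]; [rewrite hs | apply: psd_dm].
  - rewrite big_split /= -mulr_sumr (trace_anti hn antif_Xp) mulr0 addr0.
    by rewrite /rho trace_dm hsum.
apply: (notdet (x0 := [ffun => false]) (y0 := [ffun => false]) antif_Xp hd).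
rewrite /Xp eqxx mulf_neq0 ?signr_eq0 // /t !mulf_neq0 ?invr_eq0 ?signr_eq0 //.
by rewrite pnatr_eq0 -lt0n fact_gt0.
Qed.

Let z0 : BS n := [ffun => false].
Let z1 : BS n := [ffun => true].

Lemma z01 : z0 != z1.
Proof. by apply/eqP=> /ffunP/(_ (Ordinal hn)); rewrite !ffunE. Qed.

Definition X1 : op C (BS n) := fun x y =>
  ((x == z0) && (y == z1))%:R + ((x == z1) && (y == z0))%:R.

Lemma X1_zero (q : 'I_n) (u v : BS n) : u q = v q -> X1 u v = 0.
Proof.
move=> e; rewrite /X1.
have -> : (u == z0) && (v == z1) = false.
  by apply/negP => /andP[/eqP hu /eqP hv]; move: e; rewrite hu hv !ffunE.
have -> : (u == z1) && (v == z0) = false.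
  by apply/negP => /andP[/eqP hu /eqP hv]; move: e; rewrite hu hv !ffunE.
by rewrite addr0.
Qed.

Lemma antif_X1 : antif X1.
Proof.
move=> q u v e; rewrite (X1_zero e) (@X1_zero q) ?oppr0 //.
by rewrite !flip_q e.
Qed.

Lemma Bf_lin (A B : op C (BS n)) (t : C) (u : BS n -> C) :
  Bf (fun x y => A x y + t * B x y) u u = Bf A u u + t * Bf B u u.
Proof.
rewrite /Bf mulr_sumr -big_split; apply: eq_bigr => a _ /=.
rewrite mulr_sumr -big_split; apply: eq_bigr => b _ /=; ring.
Qed.

Lemma Bf_X1 (v : BS n -> C) : Bf X1 v v = (v z0)^* * v z1 + (v z1)^* * v z0.
Proof.
rewrite /Bf.
transitivity (\sum_a ((v a)^* * v z1 * (a == z0)%:R + (v a)^* * v z0 * (a == z1)%:R)).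
  apply: eq_bigr => a _.
  transitivity (\sum_b (((v a)^* * (a == z0)%:R * v b) * (b == z1)%:R
                       + ((v a)^* * (a == z1)%:R * v b) * (b == z0)%:R)).
    apply: eq_bigr => b _; rewrite /X1 -!mulnb !natrM; ring.
  by rewrite big_split /= !sum_delta; ring.
by rewrite big_split /= !sum_delta.
Qed.

Lemma wt_eq0 y : (wt y == 0%N) = (y == z0).
Proof.
rewrite /wt cards_eq0; apply/eqP/eqP => [h|->].
  apply/ffunP=> i; rewrite ffunE; apply/negbTE/negP => hi.
  have : i \in [set i | y i] by rewrite inE.
  by rewrite h inE.
by apply/setP=> i; rewrite !inE ffunE.
Qed.

Lemma wt_eqn y : (wt y == n) = (y == z1).
Proof.
apply/eqP/eqP => [h|->].
  have : [set i | y i] == [set: 'I_n].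
    by rewrite eqEcard subsetT cardsT card_ord /=; move: h; rewrite /wt => ->.
  move/eqP=> hs; apply/ffunP=> i; rewrite ffunE.
  have : i \in [set i | y i] by rewrite hs inE.
  by rewrite inE.
rewrite /wt (_ : [set i | z1 i] = [set: 'I_n]) ?cardsT ?card_ord //.
by apply/setP=> i; rewrite !inE ffunE.
Qed.

Lemma wv0 (v : BS n -> C) : wv v ord0 = v z0.
Proof.
rewrite /wv (eq_bigr (fun y => v y * (y == z0)%:R)) ?sum_delta // => y _.
rewrite /dicke /= wt_eq0 bin0 sqrtC1 invr1; case: eqP => _;
  by rewrite ?conjC1 ?conjC0 ?mul1r ?mulr1 ?mul0r ?mulr0.
Qed.

Lemma wvn (v : BS n -> C) : wv v ord_max = v z1.
Proof.
rewrite /wv (eq_bigr (fun y => v y * (y == z1)%:R)) ?sum_delta // => y _.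
rewrite /dicke /= wt_eqn binn sqrtC1 invr1; case: eqP => _;
  by rewrite ?conjC1 ?conjC0 ?mul1r ?mulr1 ?mul0r ?mulr0.
Qed.

Lemma end_case : lam ord0 * lam ord_max != 0 ->
  forall Sc, determines rho Sc -> (n <= maxsize Sc)%N.
Proof.
move=> hne.
set t := lam ord0 * lam ord_max.
have t0 : 0 <= t by rewrite mulr_ge0.
have hq (z : C) : 0 <= z^* * z by rewrite mulrC mul_conjC_ge0.
have hd : density (fun x y => rho x y + t * X1 x y).
  split.
  - move=> x y; rewrite rmorphD rmorphM /= -(herm_dm hpos) geC0_conj //.
    rewrite /rho /X1 rmorphD /= !conjC_nat; congr (_ + _ * _); rewrite addrC; congr (_%:R + _%:R); by rewrite andbC.
  - move=> v; rewrite -/(Bf _ _ _) Bf_lin Bf_X1 /rho Bf_dm.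
    rewrite (bigD1 ord0) // (bigD1 ord_max) /=; last first.
      by apply/eqP=> /(congr1 val) /=; move: hn; case: n.
    rewrite wv0 wvn.
    set R := \sum_(i | _) _.
    have R0 : 0 <= R by apply: sumr_ge0 => i _; rewrite mulr_ge0.
    set A0 := v z0; set A1 := v z1.
    have -> : lam ord0 * (A0^* * A0) + (lam ord_max * (A1^* * A1) + R) + t * (A0^* * A1 + A1^* * A0)
      = lam ord0 * (1 - lam ord_max) * (A0^* * A0) + lam ord_max * (1 - lam ord0) * (A1^* * A1)
        + t * ((A0 + A1)^* * (A0 + A1)) + R.
      by rewrite rmorphD /= /t; ring.
    have l0 : 0 <= 1 - lam ord0 by rewrite subr_ge0 lam_le1.
    have ln : 0 <= 1 - lam ord_max by rewrite subr_ge0 lam_le1.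
    by rewrite !addr_ge0 // mulr_ge0 ?hq ?mulr_ge0.
  - rewrite big_split /= -mulr_sumr (trace_anti hn antif_X1) mulr0 addr0.
    by rewrite /rho trace_dm hsum.
apply: (notdet (x0 := z0) (y0 := z1) antif_X1 hd).
by rewrite /X1 !eqxx /= (negbTE z01) addr0 mulr1.
Qed.

End Easy.

Unset Implicit Arguments.

Theorem mainTheorem19 (C : numClosedFieldType) (n : nat) (hn : (2 <= n)%N)
  (lam : 'I_n.+1 -> C) (hpos : forall i, 0 <= lam i)
  (hsum : \sum_(i < n.+1) lam i = 1) :
  is_L (dicke_mix lam) n <->
  [\/ lam ord0 * lam ord_max != 0,
      (forall i : 'I_n.+1, odd i -> lam i != 0)
    | (forall i : 'I_n.+1, ~~ odd i -> lam i != 0)].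
Proof.
have hn0 : (0 < n)%N by apply: leq_trans hn.
split.
  case=> _ hmin.
  case: (boolP (lam ord0 * lam ord_max != 0)) => [h|]; first exact: Or31.
  rewrite negbK => /eqP h0.
  case: (boolP [forall i : 'I_n.+1, odd i ==> (lam i != 0)]) => [/forallP h|].
    by apply: Or32 => i hi; exact: (implyP (h i) hi).
  rewrite negb_forall => /existsP[a]; rewrite negb_imply negbK => /andP[ha /eqP hla].
  case: (boolP [forall i : 'I_n.+1, ~~ odd i ==> (lam i != 0)]) => [/forallP h|].
    by apply: Or33 => i hi; exact: (implyP (h i) hi).
  rewrite negb_forall => /existsP[b]; rewrite negb_imply negbK => /andP[hb /eqP hlb].
  exfalso.
  have [c hc] : exists c, lam (inord (wt ([ffun => c] : BS n))) = 0.
    move/eqP: h0; rewrite mulf_eq0 => /orP[/eqP h|/eqP h].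
      exists false.
      have -> : wt ([ffun => false] : BS n) = 0%N by apply/eqP; rewrite wt_eq0.
      by rewrite (_ : inord 0 = ord0) //; apply: val_inj; rewrite /= inordK.
    exists true.
    have -> : wt ([ffun => true] : BS n) = n by apply/eqP; rewrite wt_eqn.
    by rewrite (_ : inord n = ord_max) //; apply: val_inj; rewrite /= inordK.
  have := hmin _ (hard_det hpos ha hla hb hlb hc).
  move=> /leq_trans /(_ (maxsize_C1 _)).
  by rewrite -{1}(prednK hn0) ltnn.
move=> hcond; split.
  by exists [set setT]; split; [exact: det_T | exact: maxsize_T].
case: hcond => [h|h|h].
- exact: end_case.
- by apply: (par_case hn0 hpos hsum (e := true)) => i /= hi; apply: h; rewrite hi.
- by apply: (par_case hn0 hpos hsum (e := false)) => i /= hi; apply: h; rewrite hi.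
Qed.
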